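(* Let $(R,\mathfrak m)$ be a $d$-dimensional Noetherian local ring of prime characteristic $p>0$, and let $I_\bullet=\{I_q\}$ be a sequence of ideals indexed by powers $q$ of $p$ with $\mathfrak m^{cq}\subseteq I_q$ for some positive integer $c$ and all $q$. Let $x\in R$ be a nonzerodivisor and $L_\bullet=\{L_q\}$ a sequence of ideals with $I_q\subseteq L_q\subseteq(I_q:x)$ for all $q$. Then there is a constant $\gamma>0$ with \[\ell_R(R/I_q)-\ell_R(R/L_q)\le\gamma\cdot q^{d-1}\] for all powers $q$ of $p$.
   Context: $q$ ranges over the powers $p^e$, $e\ge0$. *)

(* Defs.v *)
From HB Require Import structures.
From mathcomp Require Import all_boot all_order all_algebra.
Set Implicit Arguments. Unset Strict Implicit. Unset Printing Implicit Defensive.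
Import Order.TTheory GRing.Theory Num.Theory.
Local Open Scope ring_scope.

Section CommAlg.
Variable R : comNzRingType.

Definition ideal_sub (I J : R -> Prop) : Prop := forall x, I x -> J x.

Definition ideal_ssub (I J : R -> Prop) : Prop :=
  ideal_sub I J /\ exists y, J y /\ ~ I y.

Definition is_ideal (I : R -> Prop) : Prop :=
  [/\ I 0, (forall a b, I a -> I b -> I (a + b)) & (forall r a, I a -> I (r * a))].

Definition colon (I : R -> Prop) (x : R) : R -> Prop := fun y => I (y * x).

Definition ideal_pow (m : R -> Prop) (n : nat) : R -> Prop :=
  fun y => forall J, is_ideal J ->
    (forall xs : seq R, size xs = n -> (forall z, z \in xs -> m z) -> J (\prod_(z <- xs) z)) ->
    J y.

Definition is_prime_ideal (P : R -> Prop) : Prop :=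
  [/\ is_ideal P, ~ P 1 & forall a b, P (a * b) -> P a \/ P b].

Definition noetherian : Prop :=
  forall f : nat -> R -> Prop, (forall n, is_ideal (f n)) ->
    (forall n, ideal_sub (f n) (f n.+1)) ->
    exists N, forall n, (N <= n)%N -> ideal_sub (f n) (f N).

Definition local_with (m : R -> Prop) : Prop :=
  [/\ is_ideal m, ~ m 1 & forall x, ~ m x -> exists y, x * y = 1].

Definition prime_chain (P : nat -> R -> Prop) (n : nat) : Prop :=
  (forall i, (i <= n)%N -> is_prime_ideal (P i)) /\
  (forall i, (i < n)%N -> ideal_ssub (P i) (P i.+1)).

Definition krull_dim (d : nat) : Prop :=
  (exists P, prime_chain P d) /\ (forall P n, prime_chain P n -> (n <= d)%N).

Definition ideal_chain_from (I : R -> Prop) (J : nat -> R -> Prop) (n : nat) : Prop :=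
  [/\ (forall i, (i <= n)%N -> is_ideal (J i)),
      (forall y, J 0%N y <-> I y),
      (forall y, J n y) &
      (forall i, (i < n)%N -> ideal_ssub (J i) (J i.+1))].

(* length_R(R/I) = n: the R-submodules of R/I are the ideals containing I, and
   n is the maximal length of a strict chain of such submodules *)
Definition length_quot (I : R -> Prop) (n : nat) : Prop :=
  (exists J, ideal_chain_from I J n) /\
  (forall J k, ideal_chain_from I J k -> (k <= n)%N).

End CommAlg.

(* Main.v *)
Require Import Defs.
From HB Require Import structures.
From mathcomp Require Import all_boot all_order all_algebra.
From mathcomp Require Import zify ring.
From Stdlib Require Import Classical ClassicalEpsilon FunctionalExtensionality PropExtensionality List.
Set Implicit Arguments. Unset Strict Implicit. Unset Printing Implicit Defensive.
Import Order.TTheory GRing.Theory Num.Theory.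
Local Open Scope ring_scope.

Lemma pext (R : Type) (A B : R -> Prop) : (forall z, A z -> B z) -> (forall z, B z -> A z) -> A = B.
Proof. move=> h1 h2; apply: functional_extensionality => z; apply: propositional_extensionality; split; auto. Qed.

Definition full (R : Type) : R -> Prop := fun _ => True.
Arguments full : clear implicits.
Definition isum (R : comNzRingType) (A B : R -> Prop) : R -> Prop :=
  fun z => exists a b, A a /\ B b /\ z = a + b.
Definition prin (R : comNzRingType) (w : R) : R -> Prop := fun z => exists r, z = r * w.

Lemma idN (R : comNzRingType) (I : R -> Prop) a : is_ideal I -> I a -> I (- a).
Proof. case=> _ _ h3 ha; rewrite -mulN1r; exact: h3. Qed.
Lemma idD (R : comNzRingType) (I : R -> Prop) a b : is_ideal I -> I a -> I b -> I (a + b).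
Proof. by case=> _ h _; apply: h. Qed.
Lemma idB (R : comNzRingType) (I : R -> Prop) a b : is_ideal I -> I a -> I b -> I (a - b).
Proof. move=> hI ha hb; apply: idD => //; exact: idN. Qed.
Lemma idMl (R : comNzRingType) (I : R -> Prop) r a : is_ideal I -> I a -> I (r * a).
Proof. by case=> _ _ h; apply: h. Qed.
Lemma idMr (R : comNzRingType) (I : R -> Prop) r a : is_ideal I -> I a -> I (a * r).
Proof. move=> hI ha; rewrite mulrC; exact: idMl. Qed.
Lemma id0 (R : comNzRingType) (I : R -> Prop) : is_ideal I -> I 0.
Proof. by case. Qed.
Lemma id1 (R : comNzRingType) (I : R -> Prop) : is_ideal I -> I 1 -> I = full R.
Proof. move=> hI h1; apply: pext => // z _; rewrite -(mulr1 z); exact: idMl. Qed.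

Lemma full_ideal (R : comNzRingType) : is_ideal (full R).
Proof. by []. Qed.
Lemma isum_ideal (R : comNzRingType) (A B : R -> Prop) : is_ideal A -> is_ideal B -> is_ideal (isum A B).
Proof.
move=> hA hB; split.
- by exists 0, 0; rewrite addr0; split; [exact: id0|split; [exact: id0|]].
- move=> _ _ [a1 [b1 [h1 [h2 ->]]]] [a2 [b2 [h3 [h4 ->]]]].
  exists (a1 + a2), (b1 + b2); split; [exact: idD|split; [exact: idD|]].
  by rewrite addrACA.
- move=> r _ [a [b [h1 [h2 ->]]]]; exists (r * a), (r * b); split; [exact: idMl|split; [exact: idMl|]].
  by rewrite mulrDr.
Qed.
Lemma prin_ideal (R : comNzRingType) (w : R) : is_ideal (prin w).
Proof.
split.
- by exists 0; rewrite mul0r.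
- by move=> _ _ [r1 ->] [r2 ->]; exists (r1 + r2); rewrite mulrDl.
- by move=> r _ [s ->]; exists (r * s); rewrite mulrA.
Qed.
Lemma colon_ideal (R : comNzRingType) (A : R -> Prop) w : is_ideal A -> is_ideal (colon A w).
Proof.
move=> hA; rewrite /colon; split.
- by rewrite mul0r; exact: id0.
- by move=> a b ha hb; rewrite mulrDl; exact: idD.
- by move=> r a ha; rewrite -mulrA; exact: idMl.
Qed.
Lemma pow_ideal (R : comNzRingType) (m : R -> Prop) N : is_ideal (ideal_pow m N).
Proof.
split.
- by move=> J hJ _; exact: id0.
- by move=> a b ha hb J hJ h; apply: idD => //; [apply: ha|apply: hb].
- by move=> r a ha J hJ h; apply: idMl => //; apply: ha.
Qed.
Lemma pow_mem (R : comNzRingType) (m : R -> Prop) N y : m y -> ideal_pow m N (y ^+ N).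
Proof.
move=> hy J hJ h.
have := h (nseq N y); rewrite size_nseq => /(_ erefl).
rewrite big_nseq.
have -> : iter N ( *%R y) 1 = y ^+ N by elim: N {h} => [|n IH] //=; rewrite IH exprS.
apply=> z; rewrite mem_nseq => /andP [_ /eqP ->] //.
Qed.

Lemma isum_l (R : comNzRingType) (A B : R -> Prop) a : is_ideal B -> A a -> isum A B a.
Proof. by move=> hB ha; exists a, 0; rewrite addr0; split => //; split => //; exact: id0. Qed.
Lemma isum_r (R : comNzRingType) (A B : R -> Prop) b : is_ideal A -> B b -> isum A B b.
Proof. by move=> hA hb; exists 0, b; rewrite add0r; split => //; exact: id0. Qed.
Lemma isum_sub (R : comNzRingType) (A B C : R -> Prop) : is_ideal C ->
  ideal_sub A C -> ideal_sub B C -> ideal_sub (isum A B) C.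
Proof. by move=> hC hA hB _ [a [b [ha [hb ->]]]]; apply: idD => //; auto. Qed.

Definition chainB (R : comNzRingType) (X Z : R -> Prop) (C : nat -> R -> Prop) (n : nat) :=
  [/\ (forall i, (i <= n)%N -> is_ideal (C i)), C 0%N = X, C n = Z &
      (forall i, (i < n)%N -> ideal_ssub (C i) (C i.+1))].
Definition bnd (R : comNzRingType) (X Z : R -> Prop) (c : nat) :=
  forall C n, @chainB R X Z C n -> (n <= c)%N.

Definition extc (R : Type) (C : nat -> R -> Prop) (s : nat) (Z : R -> Prop) :=
  fun i => if (i <= s)%N then C i else Z.
Definition prec (R : Type) (X : R -> Prop) (C : nat -> R -> Prop) :=
  fun i => if i is j.+1 then C j else X.

Lemma iint_ideal (R : comNzRingType) (A B : R -> Prop) : is_ideal A -> is_ideal B ->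
  is_ideal (fun z => A z /\ B z).
Proof.
move=> hA hB; split.
- by split; exact: id0.
- by move=> a b [h1 h2] [h3 h4]; split; exact: idD.
- by move=> r a [h1 h2]; split; exact: idMl.
Qed.

Lemma chain_ext (R : comNzRingType) (X Y Z : R -> Prop) C s :
  chainB X Y C s -> is_ideal Z -> ideal_ssub Y Z -> chainB X Z (extc C s Z) s.+1.
Proof.
case=> h1 h2 h3 h4 hZ hYZ; split; rewrite /extc.
- by move=> i hi; case: ifP => hs; auto.
- by rewrite leq0n.
- by rewrite ltnn.
- move=> i hi; rewrite ltnS in hi; rewrite hi.
  case: ifP => hs; first exact: h4.
  have -> : i = s by move/negbT: hs; lia.
  by rewrite h3.
Qed.

Lemma chain_pre (R : comNzRingType) (X Y Z : R -> Prop) C n :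
  chainB Y Z C n -> is_ideal X -> ideal_ssub X Y -> chainB X Z (prec X C) n.+1.
Proof.
case=> h1 h2 h3 h4 hX hXY; split; rewrite /prec //.
- by case=> [|i] hi //; apply: h1.
- by case=> [|i] hi /=; [rewrite h2 | apply: h4].
Qed.

Lemma ssub_or_eq (R : comNzRingType) (A B : R -> Prop) : ideal_sub A B -> ideal_ssub A B \/ A = B.
Proof.
move=> hAB; case: (classic (exists y, B y /\ ~ A y)) => h; first by left.
right; apply: pext => // z hz; apply: NNPP => hn; apply: h; exists z; done.
Qed.

Lemma chain_mono (R : comNzRingType) (X Z : R -> Prop) C n i j :
  chainB X Z C n -> (i <= j)%N -> (j <= n)%N -> ideal_sub (C i) (C j).
Proof.
case=> _ _ _ h4 hij; elim: j hij => [|j IH] hij hj.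
- by rewrite leqn0 in hij; move/eqP: hij => ->.
- case: (ltngtP i j.+1) hij => // [hl _ | -> _ //].
  move=> z hz; have := h4 j hj; case=> hs _; apply: hs; apply: IH => //; exact: ltnW.
Qed.

Lemma bnd_full (R : comNzRingType) : bnd (full R) (full R) 0.
Proof.
move=> C [|n] // [h1 h2 h3 h4]; have := h4 0%N erefl; rewrite h2; case=> _ [y [_ hy]]; case: (hy I).
Qed.

Lemma bnd_le (R : comNzRingType) (X Z : R -> Prop) a b : bnd X Z a -> (a <= b)%N -> bnd X Z b.
Proof. by move=> h hab C n hc; apply: leq_trans (h _ _ hc) hab. Qed.

Lemma bnd_sub (R : comNzRingType) (X Y Z : R -> Prop) c :
  ideal_sub Y Z -> is_ideal Z -> bnd X Z c -> bnd X Y c.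
Proof.
move=> hYZ hZ hb C n hc; case: (ssub_or_eq hYZ) => [hs|heq].
- by have := hb _ _ (chain_ext hc hZ hs) => h; exact: ltnW h.
- by move: hc; rewrite heq; apply: hb.
Qed.

Lemma bnd_mono (R : comNzRingType) (X Y Z : R -> Prop) c :
  ideal_sub X Y -> is_ideal X -> bnd X Z c -> bnd Y Z c.
Proof.
move=> hXY hX hb C n hc; case: (ssub_or_eq hXY) => [hs|heq].
- by have := hb _ _ (chain_pre hc hX hs) => h; exact: ltnW h.
- by move: hc; rewrite -heq; apply: hb.
Qed.

Lemma chain0 (R : comNzRingType) (X : R -> Prop) : is_ideal X -> chainB X X (fun _ => X) 0.
Proof. by move=> hX; split. Qed.

Lemma bnd_concat (R : comNzRingType) (X Y Z : R -> Prop) a b :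
  is_ideal X -> is_ideal Y -> is_ideal Z -> ideal_sub X Y -> ideal_sub Y Z ->
  bnd X Y a -> bnd Y Z b -> bnd X Z (a + b).
Proof.
move=> hX hY hZ hXY hYZ ha hb C n hc.
have hc' := hc; case: hc' => c1 c2 c3 c4.
pose D i := fun z => C i z /\ Y z.
pose E i := isum (C i) Y.
have key : forall j, (j <= n)%N -> exists s t C1 C2,
    [/\ (j <= s + t)%N, chainB X (D j) C1 s & chainB Y (E j) C2 t].
  elim=> [|j IH] hj.
  - exists 0%N, 0%N, (fun _ => X), (fun _ => Y); split => //.
    + have -> : D 0%N = X.
        by apply: pext => z; rewrite /D c2; [case | move=> hz; split => //; exact: hXY].
      exact: chain0.
    + have -> : E 0%N = Y.
        apply: pext => z; rewrite /E c2.
        - exact: (isum_sub hY hXY (fun _ h => h)).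
        - by move=> hz; apply: isum_r.
      exact: chain0.
  - have [s [t [C1 [C2 [hst h1 h2]]]]] := IH (ltnW hj).
    have hsub : ideal_sub (C j) (C j.+1) by case: (c4 j hj).
    have hDi : is_ideal (D j.+1) by apply: iint_ideal => //; apply: c1.
    have hEi : is_ideal (E j.+1) by apply: isum_ideal => //; apply: c1.
    have hDs : ideal_sub (D j) (D j.+1) by move=> z [h h']; split => //; apply: hsub.
    have hEs : ideal_sub (E j) (E j.+1).
      by move=> _ [u [v [hu [hv ->]]]]; exists u, v; split => //; apply: hsub.
    have [s' [C1' [h1' hsD]]] : exists s' C1', chainB X (D j.+1) C1' s' /\
        (s' = s.+1 \/ (s' = s /\ D j = D j.+1)).
      case: (ssub_or_eq hDs) => [hsD|heqD].
        by exists s.+1, (extc C1 s (D j.+1)); split; [exact: (chain_ext h1 hDi hsD) | left].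
      by exists s, C1; rewrite -heqD; split => //; right.
    have [t' [C2' [h2' hsE]]] : exists t' C2', chainB Y (E j.+1) C2' t' /\
        (t' = t.+1 \/ (t' = t /\ E j = E j.+1)).
      case: (ssub_or_eq hEs) => [hsE|heqE].
        by exists t.+1, (extc C2 t (E j.+1)); split; [exact: (chain_ext h2 hEi hsE) | left].
      by exists t, C2; rewrite -heqE; split => //; right.
    exists s', t', C1', C2'; split => //.
    case: hsD => [-> | [-> heqD]]; first by lia.
    case: hsE => [-> | [-> heqE]]; first by lia.
    exfalso; case: (c4 j hj) => _ [y [hy1 hy2]]; apply: hy2.
    have : E j.+1 y by apply: isum_l.
    rewrite -heqE => -[u [v [hu [hv hyv]]]].
    have hvD : D j.+1 v.
      split => //; have -> : v = y - u by rewrite hyv addrAC subrr add0r.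
      apply: idB => //; [apply: c1 | apply: hsub] => //.
    rewrite -heqD in hvD; case: hvD => hv' _.
    rewrite hyv; apply: idD => //; apply: c1; exact: ltnW.
have [s [t [C1 [C2 [hst h1 h2]]]]] := key n (leqnn n).
have eD : D n = Y by apply: pext => z; rewrite /D c3 ?c3 //; [case | move=> h; split => //; exact: hYZ].
have eE : E n = Z.
  apply: pext => z; rewrite /E c3.
  - exact: (isum_sub hZ (fun _ h => h) hYZ).
  - by move=> hz; apply: isum_l.
rewrite eD in h1; rewrite eE in h2.
apply: leq_trans hst _; apply: leq_add; [exact: ha h1 | exact: hb h2].
Qed.

Lemma bnd_shift (R : comNzRingType) (A B : R -> Prop) w c :
  is_ideal A -> is_ideal B -> ideal_sub A B -> ideal_sub B (isum A (prin w)) ->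
  bnd (colon A w) (full R) c -> bnd A B c.
Proof.
move=> hA hB hAB hBw hb.
have hb' : bnd (colon A w) (colon B w) c.
  by apply: bnd_sub hb => //; exact: full_ideal.
move=> C n hc; apply: (hb' (fun i => colon (C i) w)).
have hc' := hc; case: hc' => c1 c2 c3 c4; split.
- by move=> i hi; apply: colon_ideal; apply: c1.
- by rewrite c2.
- by rewrite c3.
- move=> i hi; split; first by move=> z; rewrite /colon; case: (c4 i hi) => hs _; apply: hs.
  case: (c4 i hi) => _ [z [hz1 hz2]].
  have hzB : B z by rewrite -c3; apply: (chain_mono hc hi) => //.
  have [a [v [ha [[r hr] hzv]]]] := hBw z hzB.
  have hAi : forall k, (k <= n)%N -> ideal_sub A (C k).
    by move=> k hk; rewrite -c2; apply: (chain_mono hc).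
  exists r; split.
  + rewrite /colon -hr; have -> : v = z - a by rewrite hzv addrAC subrr add0r.
    apply: idB => //; [exact: c1 | exact: hAi].
  + rewrite /colon -hr => hv; apply: hz2; rewrite hzv; apply: idD => //.
    * by apply: c1; apply: ltnW.
    * by apply: (hAi i (ltnW hi)).
Qed.

Lemma maxel (R : comNzRingType) (hN : noetherian R) (Pr : (R -> Prop) -> Prop) :
  (exists J, is_ideal J /\ Pr J) ->
  exists J, [/\ is_ideal J, Pr J & forall K, is_ideal K -> Pr K -> ideal_sub J K -> ideal_sub K J].
Proof.
move=> [J0 [hJ0 hP0]]; apply: NNPP => hno.
have H : forall J, is_ideal J /\ Pr J ->
    exists K, (is_ideal K /\ Pr K) /\ ideal_sub J K /\ ~ ideal_sub K J.
  move=> J [hJ hPJ]; apply: NNPP => hK; apply: hno; exists J; split => // K hK1 hK2 hK3.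
  apply: NNPP => hK4; apply: hK; exists K; done.
pose T := {J : R -> Prop | is_ideal J /\ Pr J}.
pose next (t : T) : T :=
  let (K, hK) := constructive_indefinite_description _ (H _ (proj2_sig t)) in
  exist _ K (proj1 hK).
have hnext : forall t, ideal_sub (sval t) (sval (next t)) /\ ~ ideal_sub (sval (next t)) (sval t).
  move=> t; rewrite /next; case: constructive_indefinite_description => K [hK [h1 h2]] //.
pose t0 : T := exist _ J0 (conj hJ0 hP0).
pose f n := sval (iter n next t0).
have [N hN'] := hN f (fun n => proj1 (proj2_sig (iter n next t0)))
  (fun n => proj1 (hnext (iter n next t0))).
have := hN' N.+1 (leqnSn N); apply: (proj2 (hnext (iter N next t0))).
Qed.

Lemma prime_exists (R : comNzRingType) (hN : noetherian R) (J S : R -> Prop) :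
  is_ideal J -> S 1 -> (forall a b, S a -> S b -> S (a * b)) -> (forall z, J z -> ~ S z) ->
  exists P, [/\ is_prime_ideal P, ideal_sub J P & forall z, P z -> ~ S z].
Proof.
move=> hJ hS1 hSM hJS.
have [P [hP [hJP hPS] hmax]] := maxel hN (Pr := fun K => ideal_sub J K /\ forall z, K z -> ~ S z)
  (ex_intro _ J (conj hJ (conj (fun _ h => h) hJS))).
exists P; split => //; split => //; first by move=> h1; exact: hPS _ h1 hS1.
move=> a b hab; apply: NNPP => hn.
have hgen : forall c, ~ P c -> exists p r, P p /\ S (p + r * c).
  move=> c hc; apply: NNPP => hno.
  have hPc : ideal_sub J (isum P (prin c)) /\ (forall z, isum P (prin c) z -> ~ S z).
    split; first by move=> z hz; apply: isum_l; [exact: prin_ideal | exact: hJP].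
    move=> _ [p [v [hp [[r ->] ->]]]] hs; apply: hno; exists p, r; done.
  have := hmax _ (isum_ideal hP (prin_ideal c)) hPc (fun z h => isum_l (prin_ideal c) h).
  move=> /(_ c (isum_r hP (ex_intro _ 1 (esym (mul1r c))))); exact: hc.
have [p1 [r1 [hp1 hs1]]] := hgen a (fun h => hn (or_introl h)).
have [p2 [r2 [hp2 hs2]]] := hgen b (fun h => hn (or_intror h)).
apply: (hPS _ _ (hSM _ _ hs1 hs2)).
have -> : (p1 + r1 * a) * (p2 + r2 * b) = p1 * (p2 + r2 * b) + (r1 * a) * p2 + (r1 * r2) * (a * b)
  by ring.
apply: (idD hP); first apply: (idD hP).
- exact: (idMr (p2 + r2 * b) hP hp1).
- exact: (idMl (r1 * a) hP hp2).
- exact: (idMl (r1 * r2) hP hab).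
Qed.

Lemma m_prime (R : comNzRingType) (m : R -> Prop) : local_with m -> is_prime_ideal m.
Proof.
case=> hm hm1 hu; split => // a b hab; case: (classic (m a)) => ha; [by left|right].
have [a' ha'] := hu a ha.
have -> : b = a' * (a * b) by rewrite mulrA (mulrC a') ha' mul1r.
exact: idMl.
Qed.

Lemma proper_sub_m (R : comNzRingType) (m K : R -> Prop) : local_with m -> is_ideal K -> ~ K 1 ->
  ideal_sub K m.
Proof.
case=> hm hm1 hu hK hK1 z hz; apply: NNPP => hzm; have [w hw] := hu z hzm.
by apply: hK1; rewrite -hw; apply: idMr.
Qed.

Lemma bnd_m (R : comNzRingType) (m : R -> Prop) : local_with m -> bnd m (full R) 1.
Proof.
move=> hloc C n [c1 c2 c3 c4]; case: n c1 c3 c4 => [|[|n]] c1 c3 c4 //.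
exfalso.
have [_ [y [hy1 hy2]]] := c4 0%N erefl; rewrite c2 in hy2.
have hC1 : C 1%N = full R.
  apply: id1; first exact: c1.
  case: hloc => hm hm1 hu; have [w hw] := hu y hy2; rewrite -hw; apply: idMr => //; exact: c1.
have [_ [z [_ hz]]] := c4 1%N erefl; rewrite hC1 in hz; exact: hz I.
Qed.

Lemma pow_trick (R : comNzRingType) (K : R -> Prop) y a : is_ideal K ->
  bnd (isum K (prin y)) (full R) a -> forall n, bnd (isum K (prin (y ^+ n))) (full R) (n * a).
Proof.
move=> hK hb; elim=> [|n IH].
- have -> : isum K (prin (y ^+ 0)) = full R.
    apply: id1; first exact: (isum_ideal hK (prin_ideal _)).
    by apply: isum_r => //; exists 1; rewrite expr0 mulr1.
  exact: bnd_full.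
- rewrite mulSn.
  have hA := isum_ideal hK (prin_ideal (y ^+ n.+1)).
  have hB := isum_ideal hK (prin_ideal (y ^+ n)).
  apply: (bnd_concat hA hB (full_ideal R)) => //.
  + move=> _ [k [v [hk [[r ->] ->]]]]; exists k, ((r * y) * y ^+ n); split => //; split.
      by exists (r * y).
    by rewrite exprS mulrA (mulrC r y).
  + apply: (bnd_shift (w := y ^+ n)) => //.
    * move=> _ [k [v [hk [[r ->] ->]]]]; exists k, ((r * y) * y ^+ n); split => //; split.
        by exists (r * y).
      by rewrite exprS mulrA (mulrC r y).
    * move=> _ [k [v [hk [hv ->]]]]; exists k, v; split; first by apply: isum_l => //; exact: prin_ideal.
      by split.
    * apply: bnd_mono hb; last exact: (isum_ideal hK (prin_ideal _)).
      move=> _ [k [v [hk [[r ->] ->]]]]; rewrite /colon.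
      exists (k * y ^+ n), (r * y ^+ n.+1); split; first exact: idMr.
      by split; [exists r | rewrite mulrDl exprS mulrA (mulrC r y) -!mulrA].
Qed.

Lemma pchain_pre (R : comNzRingType) (C : nat -> R -> Prop) n Q :
  prime_chain C n -> is_prime_ideal Q -> ideal_ssub Q (C 0%N) -> prime_chain (prec Q C) n.+1.
Proof.
case=> h1 h2 hQ hQC; split.
- by case=> [|i] hi //=; apply: h1.
- by case=> [|i] hi //=; apply: h2.
Qed.

Lemma pchain_mono (R : comNzRingType) (C : nat -> R -> Prop) n i :
  prime_chain C n -> (i <= n)%N -> ideal_sub (C 0%N) (C i).
Proof.
case=> _ h2; elim: i => [|i IH] hi //.
move=> z hz; case: (h2 i hi) => hs _; apply: hs; apply: IH => //; exact: ltnW.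
Qed.

Lemma radical (R : comNzRingType) (m J : R -> Prop) (hN : noetherian R) (hloc : local_with m) :
  is_ideal J -> (forall C n, prime_chain C n -> ideal_sub J (C 0%N) -> (n <= 0)%N) ->
  forall g, m g -> exists n, J (g ^+ n).
Proof.
move=> hJ hch g hg; apply: NNPP => hno.
have hS1 : (fun z => exists n, z = g ^+ n) 1 by exists 0%N; rewrite expr0.
have hSM : forall a b, (fun z => exists n, z = g ^+ n) a -> (fun z => exists n, z = g ^+ n) b ->
    (fun z => exists n, z = g ^+ n) (a * b).
  by move=> a b [n1 ->] [n2 ->]; exists (n1 + n2)%N; rewrite exprD.
have hJS : forall z, J z -> ~ (fun z => exists n, z = g ^+ n) z.
  by move=> z hz [n e]; apply: hno; exists n; rewrite -e.
have [P [hP hJP hPS]] := prime_exists hN hJ hS1 hSM hJS.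
have hm := m_prime hloc.
suff : (1 <= 0)%N by []. apply: (hch (fun i => if i is 0%N then P else m) 1%N) => //.
split; first by case=> [|[|i]] hi.
case=> [|i] // _; split.
- case: hP => hPi hP1 _; exact: proper_sub_m.
- by exists g; split => //; move=> hPg; apply: (hPS g hPg); exists 1%N; rewrite expr1.
Qed.

Lemma E0 (R : comNzRingType) (m J : R -> Prop) (hN : noetherian R) (hloc : local_with m) :
  is_ideal J -> (forall C n, prime_chain C n -> ideal_sub J (C 0%N) -> (n <= 0)%N) ->
  exists c, bnd J (full R) c.
Proof.
move=> hJ hch; apply: NNPP => hno.
have [K0 [hK0 [hJK hK0b] hmax]] := maxel hN
  (Pr := fun K => ideal_sub J K /\ forall c, ~ bnd K (full R) c)
  (ex_intro _ J (conj hJ (conj (fun _ h => h) (fun c h => hno (ex_intro _ c h))))).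
have hK01 : ~ K0 1 by move=> h; rewrite (id1 hK0 h) in hK0b; apply: (hK0b 0%N); apply: bnd_full.
have hK0m := proper_sub_m hloc hK0 hK01.
case: (classic (ideal_sub m K0)) => hmK.
  have e : K0 = m by apply: pext.
  by rewrite e in hK0b; apply: (hK0b 1%N); exact: bnd_m.
have [g [hg hgK]] : exists g, m g /\ ~ K0 g.
  by apply: NNPP => h; apply: hmK => z hz; apply: NNPP => hz'; apply: h; exists z.
have [n hn] := radical hN hloc hJ hch hg.
have hK1 := isum_ideal hK0 (prin_ideal g).
have [c hc] : exists c, bnd (isum K0 (prin g)) (full R) c.
  apply: NNPP => hnc.
  have := hmax _ hK1 (conj (fun z h => isum_l (prin_ideal g) (hJK z h))
     (fun c h => hnc (ex_intro _ c h))) (fun z h => isum_l (prin_ideal g) h).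
  move=> /(_ g (isum_r hK0 (ex_intro _ 1 (esym (mul1r g))))); exact: hgK.
have := @pow_trick _ _ _ _ hK0 hc n.
have -> : isum K0 (prin (g ^+ n)) = K0.
  apply: pext; last by move=> z hz; exact: isum_l (prin_ideal _) hz.
  apply: isum_sub => // _ [r ->]; apply: idMl => //; exact: hJK.
exact: hK0b.
Qed.

Lemma sublistP (A : Type) (T : A -> Prop) (l : list A) :
  exists l', forall z, In z l' <-> In z l /\ T z.
Proof.
elim: l => [|a l [l' IH]]; first by exists nil; move=> z; split => // -[].
case: (classic (T a)) => ha.
- exists (a :: l') => z /=; rewrite IH; split.
  + by case=> [<- | [h1 h2]]; split => //; [left | right].
  + by case=> [[<- | h1] h2]; [left | right].
- exists l' => z /=; rewrite IH; split.
  + by case=> h1 h2; split => //; right.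
  + by case=> [[<- | h1] h2] //.
Qed.

Lemma finite_primes (R : comNzRingType) (hN : noetherian R) (J : R -> Prop) : is_ideal J ->
  exists Ps : list (R -> Prop), (forall P, In P Ps -> is_prime_ideal P /\ ideal_sub J P) /\
    (forall P, is_prime_ideal P -> ideal_sub J P -> exists P', In P' Ps /\ ideal_sub P' P).
Proof.
move=> hJ; apply: NNPP => hg.
have [J0 [hJ0 hg0 hmax]] := maxel hN (Pr := fun K => ~ exists Ps : list (R -> Prop),
    (forall P, In P Ps -> is_prime_ideal P /\ ideal_sub K P) /\
    (forall P, is_prime_ideal P -> ideal_sub K P -> exists P', In P' Ps /\ ideal_sub P' P))
  (ex_intro _ J (conj hJ hg)).
apply: hg0.
case: (classic (J0 1)) => h1.
  exists nil; split => // P [_ hP1 _] hJP; exfalso; exact: hP1 (hJP _ h1).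
case: (classic (is_prime_ideal J0)) => hpr.
  exists (J0 :: nil); split.
  - by move=> P [<- | []]; split.
  - by move=> P hP hJP; exists J0; split => //; left.
have [a [b [hab [ha hb]]]] : exists a b, J0 (a * b) /\ ~ J0 a /\ ~ J0 b.
  apply: NNPP => hno; apply: hpr; split => // a b hab; apply: NNPP => h; apply: hno.
  by exists a, b; split => //; split => h'; apply: h; [left | right].
have hgood : forall c, ~ J0 c -> exists Ps : list (R -> Prop),
    (forall P, In P Ps -> is_prime_ideal P /\ ideal_sub (isum J0 (prin c)) P) /\
    (forall P, is_prime_ideal P -> ideal_sub (isum J0 (prin c)) P -> exists P', In P' Ps /\ ideal_sub P' P).
  move=> c hc; apply: NNPP => hno.
  have := hmax _ (isum_ideal hJ0 (prin_ideal c)) hno (fun z h => isum_l (prin_ideal c) h).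
  move=> /(_ c (isum_r hJ0 (ex_intro _ 1 (esym (mul1r c))))); exact: hc.
have [Pa [hPa1 hPa2]] := hgood a ha.
have [Pb [hPb1 hPb2]] := hgood b hb.
exists (Pa ++ Pb); split.
- move=> P hin; case: (in_app_or _ _ _ hin) => h.
  + have [k1 k2] := hPa1 P h; split => // z hz; apply: k2; exact: isum_l (prin_ideal a) hz.
  + have [k1 k2] := hPb1 P h; split => // z hz; apply: k2; exact: isum_l (prin_ideal b) hz.
- move=> P hP hJP; have [hPi _ hPm] := hP; case: (hPm a b (hJP _ hab)) => hx.
  + have [P' [k1 k2]] := hPa2 P hP (isum_sub hPi hJP (fun _ '(ex_intro r e) => eq_ind_r P (idMl r hPi hx) e)).
    by exists P'; split => //; apply: in_or_app; left.
  + have [P' [k1 k2]] := hPb2 P hP (isum_sub hPi hJP (fun _ '(ex_intro r e) => eq_ind_r P (idMl r hPi hx) e)).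
    by exists P'; split => //; apply: in_or_app; right.
Qed.

Lemma prime_is_ideal (R : comNzRingType) (P : R -> Prop) : is_prime_ideal P -> is_ideal P.
Proof. by case. Qed.

Lemma build_b (R : comNzRingType) (m P : R -> Prop) (l : list (R -> Prop)) :
  is_ideal m -> is_prime_ideal P -> (exists g, m g /\ ~ P g) ->
  (forall Q, In Q l -> is_ideal Q /\ exists c, Q c /\ ~ P c) ->
  exists b, [/\ m b, ~ P b & forall Q, In Q l -> Q b].
Proof.
move=> hm hP [g [hg hgP]]; elim: l => [|Q l IH] hl.
  by exists g; split.
have [b [hb1 hb2 hb3]] := IH (fun Q' h => hl Q' (or_intror h)).
have [hQ [c [hc1 hc2]]] := hl Q (or_introl erefl).
exists (c * b); split.
- exact: idMl.
- by case: hP => _ _ hPm /hPm [].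
- move=> Q' [<- | h]; first exact: idMr.
  apply: idMl; [exact: (proj1 (hl Q' (or_intror h))) | exact: hb3].
Qed.

Lemma avoid (R : comNzRingType) (m : R -> Prop) : is_ideal m ->
  forall n (Ps : list (R -> Prop)), length Ps = n ->
  (forall P, In P Ps -> is_prime_ideal P /\ ~ ideal_sub m P) ->
  exists y, m y /\ forall P, In P Ps -> ~ P y.
Proof.
move=> hm; elim=> [|n IH] Ps hlen hPs.
  by case: Ps hlen hPs => // _ _; exists 0; split => //; exact: id0.
case: Ps hlen hPs => [|P Ps] // hlen0 hPs.
have hlen : length Ps = n by case: hlen0.
have [hP hmP] := hPs P (or_introl erefl).
case: (classic (exists Q, In Q Ps /\ ideal_sub Q P)) => [[Q [hQ hQP]] | hno].
  have [l1 [l2 e]] := in_split Q Ps hQ.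
  have [y [hy hyP]] : exists y, m y /\ forall P', In P' (P :: (l1 ++ l2)%list) -> ~ P' y.
    apply: IH.
  - by rewrite /= List.length_app -hlen e List.length_app /=; lia.
  - move=> P' [<- | h]; first by split.
    apply: hPs; right; rewrite e; apply: in_or_app; case: (in_app_or _ _ _ h) => h'; [left | right; right] => //.
  exists y; split => // P' [<- | h]; first by apply: hyP; left.
  rewrite e in h; case: (in_app_or _ _ _ h) => [h' | [<- | h']].
  - by apply: hyP; right; apply: in_or_app; left.
  - by move=> hQy; apply: (hyP P); [left | exact: hQP].
  - by apply: hyP; right; apply: in_or_app; right.
have [a [ha haPs]] := IH Ps hlen (fun P' h => hPs P' (or_intror h)).
case: (classic (P a)) => hPa; last first.
  by exists a; split => // P' [<- | h] //; exact: haPs.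
have hg : exists g, m g /\ ~ P g.
  by apply: NNPP => h; apply: hmP => z hz; apply: NNPP => hz'; apply: h; exists z.
have [b [hb1 hb2 hb3]] := build_b (l := Ps) hm hP hg
  (fun Q h => conj (prime_is_ideal (proj1 (hPs Q (or_intror h))))
     (NNPP _ (fun hc => hno (ex_intro _ Q (conj h (fun z hz => NNPP _ (fun hz' => hc (ex_intro _ z (conj hz hz'))))))))).
have hPi : is_ideal P by case: hP.
exists (a + b); split; first exact: idD.
move=> P' [<- | h] hab.
  apply: hb2; have -> : b = (a + b) - a by rewrite addrAC subrr add0r.
  exact: idB.
have hP'i : is_ideal P' by case: (proj1 (hPs P' (or_intror h))).
apply: (haPs P' h); have -> : a = (a + b) - b by rewrite addrK.
apply: idB => //; exact: hb3.
Qed.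

Lemma isum_absorb (R : comNzRingType) (A B : R -> Prop) : is_ideal A -> is_ideal B -> ideal_sub B A -> isum A B = A.
Proof.
move=> hA hB hBA; apply: pext; first exact: isum_sub.
by move=> z hz; apply: isum_l.
Qed.

Lemma isum_swap (R : comNzRingType) (A B C : R -> Prop) : isum (isum A B) C = isum (isum A C) B.
Proof.
apply: pext => _ [_ [c [[a [b [ha [hb ->]]]] [hc ->]]]].
- by exists (a + c), b; split; [exists a, c | split => //; rewrite addrAC].
- by exists (a + c), b; split; [exists a, c | split => //; rewrite addrAC].
Qed.

Lemma Ebound (R : comNzRingType) (m : R -> Prop) (hN : noetherian R) (hloc : local_with m) :
  forall k J, is_ideal J -> (forall C n, prime_chain C n -> ideal_sub J (C 0%N) -> (n <= k)%N) ->
  exists Cst, forall N, bnd (isum J (ideal_pow m N)) (full R) (Cst * N.+1 ^ k).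
Proof.
have hm := m_prime hloc; have hmi : is_ideal m := prime_is_ideal hm.
elim=> [|k IH] J hJ hch.
  have [c hc] := E0 hN hloc hJ hch.
  exists c => N; rewrite expn0 muln1; apply: (bnd_mono _ hJ hc).
  by move=> z hz; apply: isum_l => //; exact: pow_ideal.
have [Ps [hPs hcov]] := finite_primes hN hJ.
pose T (P : R -> Prop) := exists C, prime_chain C k.+1 /\ C 0%N = P.
have [Qs hQs] := sublistP T Ps.
have [y [hy hyQ]] : exists y, m y /\ forall P, In P Qs -> ~ P y.
  apply: (avoid hmi (erefl (length Qs))) => Q /hQs [hin [C [hC e]]].
  split; first exact: (proj1 (hPs Q hin)).
  move=> hmQ; case: hC => hC1 hC2; have [_ [z [hz1 hz2]]] := hC2 0%N erefl.
  rewrite e in hz2; apply: hz2; apply: hmQ.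
  have [hC1i hC11 _] := hC1 1%N erefl.
  exact: (proper_sub_m hloc hC1i hC11).
pose J' := isum J (prin y).
have hJ' : is_ideal J' := isum_ideal hJ (prin_ideal y).
have hch' : forall C n, prime_chain C n -> ideal_sub J' (C 0%N) -> (n <= k)%N.
  move=> C n hC hJC.
  have hle := hch C n hC (fun z h => hJC z (isum_l (prin_ideal y) h)).
  rewrite leq_eqVlt in hle; case/orP: hle => [/eqP en | ]; last by rewrite ltnS.
  exfalso; subst n.
  have hC0 : is_prime_ideal (C 0%N) := (proj1 hC) 0%N (leq0n _).
  have [P' [hin hP'C]] := hcov (C 0%N) hC0 (fun z h => hJC z (isum_l (prin_ideal y) h)).
  have [hP'pr hJP'] := hPs P' hin.
  case: (ssub_or_eq hP'C) => [hs | e].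
    by have := hch (prec P' C) k.+2 (pchain_pre hC hP'pr hs) hJP'; rewrite ltnn.
  have hQ : In P' Qs by apply/hQs; split => //; exists C; split.
  by apply: (hyQ P' hQ); rewrite e; apply: hJC; apply: isum_r => //; exists 1; rewrite mul1r.
have [Cst hCst] := IH J' hJ' hch'.
exists Cst => N.
have hK := isum_ideal hJ (pow_ideal m N).
have hb : bnd (isum (isum J (ideal_pow m N)) (prin y)) (full R) (Cst * N.+1 ^ k).
  by rewrite isum_swap; exact: hCst.
have := @pow_trick _ _ _ _ hK hb N.
rewrite (isum_absorb hK (prin_ideal _)); last first.
  move=> _ [r ->]; apply: isum_r => //; exact: (idMl r (pow_ideal m N) (pow_mem hy)).
move=> h; apply: bnd_le h _; rewrite expnS; nia.
Qed.

Lemma maxnat (Pn : nat -> Prop) d : Pn 0%N -> (forall n, Pn n -> (n <= d)%N) ->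
  exists n, Pn n /\ forall k, Pn k -> (k <= n)%N.
Proof.
move=> h0 hd; apply: NNPP => hno.
have : forall i, exists n, Pn n /\ (i <= n)%N.
  elim=> [|i [n [hn hin]]]; first by exists 0%N.
  have [k [hk hnk]] : exists k, Pn k /\ (n < k)%N.
    apply: NNPP => h; apply: hno; exists n; split => // k hk; apply: NNPP => hkn; apply: h.
    by exists k; split => //; rewrite ltnNge; apply/negP.
  by exists k; split => //; apply: leq_ltn_trans hnk.
move=> /(_ d.+1) [n [hn hdn]]; have := hd n hn; lia.
Qed.

Lemma zero_div (R : comNzRingType) (hN : noetherian R) (Q : R -> Prop) a :
  is_prime_ideal Q -> (forall Q', is_prime_ideal Q' -> ideal_sub Q' Q -> ideal_sub Q Q') ->
  Q a -> exists y, y <> 0 /\ a * y = 0.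
Proof.
move=> hQ hmin hQa; have [hQi hQ1 hQm] := hQ.
case: (classic (exists s n, ~ Q s /\ s * a ^+ n = 0)) => [[s [n [hs e]]] | hno].
  elim: n s hs e => [|n IHn] s hs e.
    by exfalso; apply: hs; rewrite expr0 mulr1 in e; rewrite e; exact: id0.
  case: (classic (s * a ^+ n = 0)) => h; first exact: (IHn s hs h).
  by exists (s * a ^+ n); split => //; rewrite -e exprS mulrCA.
pose S z := exists s n, ~ Q s /\ z = s * a ^+ n.
have hS1 : S 1 by exists 1, 0%N; rewrite expr0 mulr1.
have hSM : forall u v, S u -> S v -> S (u * v).
  move=> _ _ [s1 [n1 [h1 ->]]] [s2 [n2 [h2 ->]]]; exists (s1 * s2), (n1 + n2)%N; split.
    by case/hQm.
  by rewrite exprD; ring.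
have hzi : is_ideal (fun z : R => z = 0).
  by split => // [u v -> -> | r u ->]; rewrite ?addr0 ?mulr0.
have [P [hP _ hPS]] := prime_exists hN hzi hS1 hSM
  (fun z hz '(ex_intro s (ex_intro n (conj hs e))) => hno (ex_intro _ s (ex_intro _ n (conj hs (eq_trans (esym e) hz))))).
have hPQ : ideal_sub P Q.
  by move=> z hz; apply: NNPP => hz'; apply: (hPS z hz); exists z, 0%N; rewrite expr0 mulr1.
apply: False_ind; apply: (hPS a (hmin P hP hPQ a hQa)); exists 1, 1%N; split => //.
by rewrite expr1 mul1r.
Qed.

Lemma min_prime_below (R : comNzRingType) (d : nat) (hdim : krull_dim R d) (P0 : R -> Prop) :
  is_prime_ideal P0 -> exists Q, [/\ is_prime_ideal Q, ideal_sub Q P0 &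
    forall Q', is_prime_ideal Q' -> ideal_sub Q' Q -> ideal_sub Q Q'].
Proof.
move=> hP0.
have [k0 [[D [hD eD]] hmax]] := maxnat (Pn := fun k => exists D, prime_chain D k /\ D k = P0)
  (d := d) (ex_intro _ (fun _ => P0) (conj (conj (fun _ _ => hP0) (fun i (h : (i < 0)%N) => False_ind _ (notF h))) erefl))
  (fun n '(ex_intro D (conj hD _)) => proj2 hdim D n hD).
exists (D 0%N); split.
- exact: (proj1 hD 0%N (leq0n _)).
- by rewrite -eD; exact: (pchain_mono hD (leqnn _)).
- move=> Q' hQ' hQ'D; apply: NNPP => hno.
  have hs : ideal_ssub Q' (D 0%N).
    split => //; apply: NNPP => h; apply: hno => z hz; apply: NNPP => hz'; apply: h; exists z; done.
  have := hmax k0.+1 (ex_intro _ (prec Q' D) (conj (pchain_pre hD hQ' hs) eD)).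
  by rewrite ltnn.
Qed.

Lemma dim_drop (R : comNzRingType) (d : nat) (hN : noetherian R) (hdim : krull_dim R d) (x : R)
  (hx : forall y, x * y = 0 -> y = 0) :
  forall C n, prime_chain C n -> ideal_sub (prin x) (C 0%N) -> (n.+1 <= d)%N.
Proof.
move=> C n hC hxC.
have hC0 : is_prime_ideal (C 0%N) := (proj1 hC) 0%N (leq0n _).
have [Q [hQ hQC hmin]] := min_prime_below hdim hC0.
have hxQ : ~ Q x.
  by move=> h; have [y [hy e]] := zero_div hN hQ hmin h; apply: hy; exact: hx.
have hs : ideal_ssub Q (C 0%N).
  by split => //; exists x; split => //; apply: hxC; exists 1; rewrite mul1r.
exact: (proj2 hdim _ _ (pchain_pre hC hQ hs)).
Qed.

Lemma lq_bnd (R : comNzRingType) (I : R -> Prop) l : length_quot I l -> bnd I (full R) l.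
Proof.
move=> [_ hmax] C n [c1 c2 c3 c4]; apply: (hmax C n); split => //.
- by move=> y; rewrite c2.
- by move=> y; rewrite c3.
Qed.

Lemma lq_chain (R : comNzRingType) (I : R -> Prop) l : length_quot I l -> exists C, chainB I (full R) C l.
Proof.
move=> [[J [j1 j2 j3 j4]] _]; exists J; split => //.
- by apply: pext => y; case: (j2 y).
- by apply: pext => y _; [ | exact: j3].
Qed.

Lemma leq_expb (a b k : nat) : (a <= b)%N -> (a ^ k <= b ^ k)%N.
Proof. by move=> h; elim: k => [|k IH] //; rewrite !expnS leq_mul. Qed.

Theorem mainTheorem19 (R : comNzRingType) (m : R -> Prop) (d p c : nat)
  (I L : nat -> R -> Prop) (x : R)
  (hnoeth : noetherian R) (hloc : local_with m) (hdim : krull_dim R d)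
  (hp : prime p) (hchar : p \in [pchar R])
  (hc : (0 < c)%N)
  (hI : forall e, is_ideal (I e))
  (hmI : forall e, ideal_sub (ideal_pow m (c * p ^ e)) (I e))
  (hx : forall y, x * y = 0 -> y = 0)
  (hL : forall e, is_ideal (L e))
  (hIL : forall e, ideal_sub (I e) (L e))
  (hLc : forall e, ideal_sub (L e) (colon (I e) x)) :
  exists gamma : rat, 0 < gamma /\
    forall (e lI lL : nat), length_quot (I e) lI -> length_quot (L e) lL ->
      ((lI%:Z - lL%:Z)%:~R : rat) <= gamma * ((p ^ e)%N%:R : rat) ^ (d%:Z - 1).
Proof.
have hm := m_prime hloc; have hmi : is_ideal m := prime_is_ideal hm.
have hdrop := dim_drop hnoeth hdim hx.
have key : forall e lI lL B, length_quot (I e) lI -> length_quot (L e) lL ->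
    bnd (isum (prin x) (ideal_pow m (c * p ^ e))) (full R) B -> (lI <= lL + B)%N.
  move=> e lI lL B hlI hlL hB.
  have [C hC] := lq_chain hlI; apply: (_ : bnd (I e) (full R) (lL + B)) hC.
  have hB' := isum_ideal (hI e) (prin_ideal x).
  apply: (bnd_concat (hI e) hB' (full_ideal R)) => //.
  - by move=> z hz; apply: isum_l => //; exact: prin_ideal.
  - apply: (bnd_shift (w := x)) => //.
    + by move=> z hz; apply: isum_l => //; exact: prin_ideal.
    + apply: bnd_mono (lq_bnd hlL); [exact: hLc | exact: hL].
  - apply: bnd_mono hB; last exact: (isum_ideal (prin_ideal x) (pow_ideal m _)).
    apply: isum_sub => //.
    + by move=> z hz; apply: isum_r => //; exact: hI.
    + by move=> z hz; apply: isum_l => //; [exact: prin_ideal | exact: hmI].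
have hq : forall e, (0 < p ^ e)%N by move=> e; rewrite expn_gt0 prime_gt0.
case: d hdim hdrop => [|d] hdim hdrop.
  have hxm : ~ m x.
    move=> h; have := hdrop (fun _ => m) 0%N (conj (fun _ _ => hm) (fun i (h : (i < 0)%N) => False_ind _ (notF h))).
    by move=> /(_ (fun _ '(ex_intro r e) => eq_ind_r m (idMl r hmi h) e)).
  case: hloc => _ _ hu; have [w hw] := hu x hxm.
  exists 1; split => // e lI lL hlI hlL.
  have hle := key e lI lL 0%N hlI hlL.
  have e0 : isum (prin x) (ideal_pow m (c * p ^ e)) = full R.
    apply: id1; first exact: (isum_ideal (prin_ideal x) (pow_ideal m _)).
    by apply: isum_l; [exact: pow_ideal | exists w; rewrite mulrC].
  rewrite e0 in hle; have hb0 : bnd (full R) (full R) 0 by apply: bnd_full.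
  have := hle hb0; rewrite addn0 => hle'.
  apply: (@le_trans _ _ 0).
    by rewrite -(mulr0z 1) ler_int; lia.
  by rewrite mul1r; apply: exprz_ge0; exact: ler0n.
have [Cst hCst] := Ebound hnoeth hloc (k := d) (prin_ideal x)
  (fun C n hC hxC => hdrop C n hC hxC).
exists ((Cst * (c + 1) ^ d).+1)%:R; split; first by rewrite ltr0n.
move=> e lI lL hlI hlL.
have hle := key e lI lL _ hlI hlL (hCst (c * p ^ e)%N).
have hq' := hq e.
have h2 : ((c * p ^ e).+1 ^ d <= (c + 1) ^ d * (p ^ e) ^ d)%N.
  by rewrite -expnMn; apply: leq_expb; nia.
have hK : (lI <= lL + Cst * (c + 1) ^ d * (p ^ e) ^ d)%N.
  apply: leq_trans hle _; rewrite leq_add2l -mulnA; exact: leq_mul.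
have -> : (d.+1%:Z - 1 = d%:Z)%R by lia.
apply: (@le_trans _ _ ((Cst * (c + 1) ^ d * (p ^ e) ^ d)%N%:Z%:~R)).
  by rewrite ler_int; lia.
change (((Cst * (c + 1) ^ d * (p ^ e) ^ d)%N%:R : rat) <=
   (Cst * (c + 1) ^ d).+1%:R * ((p ^ e)%N%:R ^+ d)).
by rewrite -natrX -natrM ler_nat leq_mul2r leqnSn orbT.
Qed.
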